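(* The $q$-Schröder numbers $r_n(q)=\sum_{k=0}^n\binom{n+k}{n-k}C_kq^{n-k}$, $n\ge0$, where $C_k=\frac{1}{k+1}\binom{2k}{k}$ is the $k$-th Catalan number, form a $q$-log-convex sequence.
   Context: For real polynomials $f,g$ write $f\le_q g$ if $g-f$ has nonnegative coefficients; a sequence $\{P_n(q)\}_{n\ge0}$ is $q$-log-convex if $P_n(q)^2\le_q P_{n-1}(q)P_{n+1}(q)$ for all $n\ge 1$. *)

(* Defs.v *)
From mathcomp Require Import all_boot all_order all_algebra.
Set Implicit Arguments. Unset Strict Implicit. Unset Printing Implicit Defensive.
Import Order.TTheory GRing.Theory Num.Theory.
Local Open Scope ring_scope.

(* Catalan number C_k = binom(2k,k)/(k+1) (exact division in nat). *)
Definition catalan (k : nat) : nat := ('C(k.*2, k) %/ k.+1)%N.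

Definition qschroeder (n : nat) : {poly int} :=
  \sum_(0 <= k < n.+1) (('C(n + k, n - k) * catalan k)%N)%:R *: 'X^(n - k).

Definition qle (R : numDomainType) (f g : {poly R}) : Prop :=
  forall i : nat, 0 <= (g - f)`_i.

Definition q_log_convex (R : numDomainType) (P : nat -> {poly R}) : Prop :=
  forall n : nat, (1 <= n)%N -> qle (P n ^+ 2) (P n.-1 * P n.+1).

(* Main.v *)
Require Import Defs.
From mathcomp Require Import all_boot all_order all_algebra.
From mathcomp Require Import ring lra zify.
Set Implicit Arguments. Unset Strict Implicit. Unset Printing Implicit Defensive.
Import Order.TTheory GRing.Theory Num.Theory.
Local Open Scope ring_scope.

Definition nng (p : {poly int}) := forall i, 0 <= p`_i.

Lemma nng0 : nng 0. Proof. by move=> i; rewrite coef0. Qed.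
Lemma nng1 : nng 1. Proof. by move=> i; rewrite coef1 ler0n. Qed.
Lemma nngX : nng 'X. Proof. by move=> i; rewrite coefX ler0n. Qed.
Lemma nngD p q : nng p -> nng q -> nng (p + q).
Proof. by move=> hp hq i; rewrite coefD addr_ge0. Qed.
Lemma nngM p q : nng p -> nng q -> nng (p * q).
Proof. move=> hp hq i; rewrite coefM; apply: sumr_ge0 => j _; exact: mulr_ge0. Qed.
Lemma nng_sum (I : finType) (F : I -> {poly int}) :
  (forall i, nng (F i)) -> nng (\sum_i F i).
Proof. move=> h j; rewrite coef_sum; apply: sumr_ge0 => i _; exact: h. Qed.

Definition P (i k : nat) : {poly int} :=
  if (k <= i)%N then 1 + 'X else if k == i.+1 then 1 else 0.

Lemma P_ge i k : (k <= i)%N -> P i k = 1 + 'X.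
Proof. by rewrite /P => ->. Qed.
Lemma P_eq i k : k = i.+1 -> P i k = 1.
Proof. by move=> ->; rewrite /P ltnn eqxx. Qed.
Lemma P_lt i k : (i.+1 < k)%N -> P i k = 0.
Proof. move=> h; rewrite /P ifF; last by lia. by rewrite ifF //; lia. Qed.

Lemma nngP i k : nng (P i k).
Proof. rewrite /P; case: ifP => _; last case: ifP => _.
- exact: nngD nng1 nngX. - exact: nng1. - exact: nng0. Qed.

Fixpoint A (n k : nat) {struct n} : {poly int} :=
  match n with
  | 0 => (k == 0)%:R
  | n'.+1 => \sum_(i < n'.+1) A n' i * P i k
  end.

Lemma A_nng n k : nng (A n k).
Proof.
elim: n k => [|n IH] k /=.
  by case: (k == 0); [exact: nng1 | exact: nng0].
apply: nng_sum => i; apply: nngM; [exact: IH | exact: nngP].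
Qed.

Lemma A_gt n k : (n < k)%N -> A n k = 0.
Proof.
case: n => [|n] h /=; first by case: k h.
apply: big1 => i _; rewrite P_lt ?mulr0 //; have := ltn_ord i; lia.
Qed.

Lemma A_SN n N k : (n < N)%N -> A n.+1 k = \sum_(i < N) A n i * P i k.
Proof.
move=> h; elim: N h => [|N IH] h; first by [].
case: (ltngtP n N) => H.
- by rewrite IH // big_ord_recr /= (A_gt (k:=N)) // mul0r addr0.
- lia.
- by subst.
Qed.

Lemma cb2 (R : comRingType) N (x y a b : nat -> R) :
  (\sum_(i < N) x i * a i) * (\sum_(j < N) y j * b j)
  - (\sum_(i < N) x i * b i) * (\sum_(j < N) y j * a j)
  = \sum_(j < N) \sum_(i < j) (x i * y j - x j * y i) * (a i * b j - a j * b i).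
Proof.
elim: N => [|N IH]; first by rewrite !big_ord0; ring.
rewrite !big_ord_recr /= -IH.
have E : \sum_(i < N) (x i * y N - x N * y i) * (a i * b N - a N * b i)
  = (\sum_(i < N) x i * a i) * (y N * b N) - (\sum_(i < N) x i * b i) * (y N * a N)
    - (x N * b N) * (\sum_(j < N) y j * a j) + (x N * a N) * (\sum_(j < N) y j * b j).
  rewrite !big_distrl !big_distrr /= -!sumrB -big_split /=.
  by apply: eq_bigr => i _; ring.
rewrite E; ring.
Qed.

Definition M n k l := A n k * A n.+1 l - A n l * A n.+1 k.

Lemma Pminor i j k l : (i < j)%N -> (k < l)%N ->
  nng (P i k * P j l - P j k * P i l).
Proof.
move=> ij kl.
case: (ltngtP l i.+1) => H.
- rewrite !P_ge; try lia. rewrite subrr; exact: nng0.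
- rewrite (P_lt H) mulr0 subr0; apply: nngM; exact: nngP.
- rewrite (P_eq H) !P_ge; try lia.
  have -> : (1 + 'X) * (1 + 'X) - (1 + 'X) * 1 = 'X + 'X * ('X : {poly int}) by ring.
  apply: nngD; [exact: nngX | apply: nngM; exact: nngX].
Qed.

Lemma M_nng n k l : (k < l)%N -> nng (M n k l).
Proof.
elim: n k l => [|n IH] k l kl.
  rewrite /M; have -> : A 0 l = 0 by apply: A_gt; lia.
  rewrite mul0r subr0; apply: nngM; exact: A_nng.
rewrite /M (A_SN (n:=n.+1) (N:=n.+2) l) // (A_SN (n:=n.+1) (N:=n.+2) k) //.
rewrite (A_SN (n:=n) (N:=n.+2) l) // (A_SN (n:=n) (N:=n.+2) k) //.
rewrite (@cb2 _ n.+2 (A n) (A n.+1) (fun i => P i k) (fun i => P i l)); apply: nng_sum => j; apply: nng_sum => i.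
apply: nngM; first by apply: IH.
apply: Pminor => //.
Qed.

Lemma sum_delta (R : nzRingType) N t (f : nat -> R) :
  (t < N)%N -> \sum_(i < N) f i * (i == t :> nat)%:R = f t.
Proof.
move=> h; rewrite (bigD1 (Ordinal h)) //= eqxx mulr1 big1 ?addr0 //.
move=> i Hi; rewrite (_ : (i == t :> nat) = false) ?mulr0 //.
apply/negbTE; apply: contra Hi => /eqP E; apply/eqP/val_inj; exact: E.
Qed.

Lemma A_lc m : nng (A m 0 * A m.+2 0 - A m.+1 0 ^+ 2).
Proof.
have := @cb2 _ m.+2 (A m) (A m.+1) (fun i : nat => (i == 0)%:R) (fun i => P i 0).
rewrite !sum_delta // -!A_SN // expr2 => ->.
apply: nng_sum => j; apply: nng_sum => i.
rewrite (_ : (j == 0 :> nat) = false); last by have := ltn_ord i; lia.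
rewrite mul0r subr0; apply: nngM; first by apply: M_nng.
apply: nngM; last exact: nngP.
by case: (i == 0 :> nat); [exact: nng1 | exact: nng0].
Qed.
Definition Wz (u d : nat) : int :=
  ('C(u + d, d))%:R - (if d is d'.+1 then 'C(u + d, d') else 0)%:R.
Definition Nf (u d j : nat) : int := ('C(u + d + j, j))%:R * Wz u d.

Lemma W_0 u : Wz u 0 = 1.
Proof. by rewrite /Wz addn0 bin0 subr0. Qed.

Lemma W_rec u d : Wz u.+1 d.+1 = Wz u d.+1 + Wz u.+1 d.
Proof.
case: d => [|d]; rewrite /Wz.
  rewrite !bin1 !bin0 ?addn1 ?addn0. rewrite -[u.+2]addn2 -[u.+1]addn1 !natrD; ring.
rewrite !addSn !addnS !binS !natrD; ring.
Qed.

Lemma W_diag u : Wz u u.+1 = 0.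
Proof.
rewrite /Wz.
have E := @bin_sub (u + u.+1) u (leq_addr _ _).
rewrite (_ : (u + u.+1 - u = u.+1)%N) in E; last lia.
by rewrite E subrr.
Qed.

Lemma pascal S j : 'C(S.+1, j) = ('C(S, j) + (if j is j'.+1 then 'C(S, j') else 0))%N.
Proof. by case: j => [|j]; rewrite ?bin0 ?binS. Qed.

Lemma Nrec u d j : (d <= u)%N -> (0 < u + j)%N ->
  Nf u d j = (if (d < u)%N then Nf u.-1 d j else 0)
           + (if j is j'.+1 then Nf u d j' else 0)
           + (if d is d'.+1 then Nf u d' j else 0).
Proof.
case: u => [|u] hd hu.
  have -> : d = 0%N by lia.
  case: j hu => [|j] hu //=.
  by rewrite /Nf !add0n !binn; ring.
case: d hd => [|d] hd.
  rewrite /= /Nf !W_0 !addn0.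
  case: j {hu} => [|j]; first by rewrite !bin0; ring.
  rewrite !addSn !addnS binS natrD; ring.
have -> : (if (d.+1 < u.+1)%N then Nf u.+1.-1 d.+1 j else 0) = Nf u d.+1 j.
  case: ifP => h //; have -> : d = u by lia.
  by rewrite /Nf W_diag mulr0.
rewrite /Nf W_rec.
case: j {hu} => [|j].
  rewrite !addn0 !addSn !addnS !bin0; ring.
rewrite !addSn !addnS binS natrD; ring.
Qed.

Definition c (n h j : nat) : int :=
  if (h + j <= n)%N then Nf (n - j) (n - h - j) j else 0.
Definition cm (n h j : nat) : int := if j is j'.+1 then c n h j' else 0.

Lemma c_rec n h j :
  c n.+1 h j = (if h is h'.+1 then c n h' j else 0) + cm n h j + c n.+1 h.+1 j.
Proof.
rewrite /cm /c; case: (leqP (h + j) n.+1) => H; last first.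
  case: h H => [|h] H; case: j H => [|j] H; rewrite ?ifF; try lia;
  by rewrite ?addr0.
rewrite (Nrec (u := n.+1 - j) (d := n.+1 - h - j) (j:=j)); try lia.
congr (_ + _ + _).
- case: h H => [|h] H.
    by rewrite ifF //; lia.
  rewrite !ifT; try lia. congr Nf; lia.
- case: j H => [|j] H //.
  rewrite ifT; try lia. congr Nf; lia.
- case E: (n.+1 - h - j)%N => [|d].
    by rewrite ifF //; lia.
  rewrite ifT; try lia. congr Nf; lia.
Qed.

Lemma ind_split a b : ((a <= b)%N%:R : int) = (a.+1 <= b)%N%:R + (b == a)%:R.
Proof.
case: (ltngtP a b) => H; rewrite ?addr0 ?add0r //.
Qed.

Definition T n j h (i : nat) : int :=
  (h <= i.+1)%N%:R * c n i j + (h <= i)%N%:R * cm n i j.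

Lemma tele_base n j h : (n.+2 <= h)%N -> c n.+1 h j = \sum_(i < n.+1) T n j h i.
Proof.
move=> H; rewrite /c ifF; last lia.
symmetry; apply: big1 => i _; have := ltn_ord i => Hi.
rewrite /T (_ : (h <= i.+1)%N = false); last lia.
by rewrite (_ : (h <= i)%N = false) ?mul0r ?addr0 //; lia.
Qed.

Lemma tele_m n j m : forall h, (h + m = n.+2)%N -> c n.+1 h j = \sum_(i < n.+1) T n j h i.
Proof.
elim: m => [|m IH] h H; first by apply: tele_base; lia.
rewrite c_rec (IH h.+1); last lia.
have -> : \sum_(i < n.+1) T n j h i = \sum_(i < n.+1) T n j h.+1 i
   + \sum_(i < n.+1) ((i.+1 == h)%:R * c n i j + (i == h :> nat)%:R * cm n i j).
  rewrite -big_split /=; apply: eq_bigr => i _.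
  rewrite /T (ind_split h i.+1) (ind_split h i); ring.
rewrite [X in _ = X]addrC; congr (_ + _); rewrite big_split /=; congr (_ + _).
- case: h H => [|h] H.
    by symmetry; apply: big1 => i _; rewrite mul0r.
  under eq_bigr => i _ do rewrite eqSS mulrC.
  by rewrite (@sum_delta _ n.+1 h (fun i => c n i j)) //; lia.
- case: (ltnP h n.+1) => Hh.
    under eq_bigr => i _ do rewrite mulrC.
    by rewrite (@sum_delta _ n.+1 h (fun i => cm n i j)).
  rewrite big1; last first.
    move=> i _; have := ltn_ord i => Hi.
    by rewrite (_ : (i == h :> nat) = false) ?mul0r //; lia.
  rewrite /cm; clear IH; case: j => [|j] //=; rewrite /c ifF //; lia.
Qed.

Lemma tele n j h : c n.+1 h j = \sum_(i < n.+1) T n j h i.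
Proof.
case: (leqP h n.+2) => H.
  apply: (@tele_m n j (n.+2 - h)); lia.
apply: tele_base; lia.
Qed.

Definition G n h : {poly int} := \poly_(j < n.+1) c n h j.

Lemma coefG n h j : (G n h)`_j = c n h j.
Proof. rewrite coef_poly; case: ifP => // H; rewrite /c ifF //; lia. Qed.

Lemma coefGP n i h j : (G n i * P i h)`_j = T n j h i.
Proof.
rewrite /T /P; case: (leqP h i) => H.
  rewrite (_ : (h <= i.+1)%N = true); last lia.
  rewrite mulrDr mulr1 coefD coefMX !coefG /cm.
  by case: j => [|j] /=; rewrite ?mul1r ?addr0.
case: eqP => E.
  by subst; rewrite leqnn mulr1 coefG mul0r mul1r addr0.
rewrite (_ : (h <= i.+1)%N = false); last lia.
by rewrite mulr0 coef0 !mul0r addr0.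
Qed.

Lemma AG n h : A n h = G n h.
Proof.
elim: n h => [|n IH] h; apply/polyP => j.
  rewrite coefG /c coefMn coef1.
  case: h => [|h]; case: j => [|j] //=.
rewrite /= coef_sum.
under eq_bigr => i _ do rewrite IH coefGP.
by rewrite coefG tele.
Qed.

Lemma cat_W u : (catalan u)%:R = Wz u u.
Proof.
case: u => [|u]; first by rewrite W_0 /catalan bin0 divn1.
rewrite /catalan /Wz -addnn.
set X := 'C(u.+1 + u.+1, u.+1); set Y := 'C(u.+1 + u.+1, u).
have E : (u.+1 * X = u.+2 * Y)%N.
  rewrite /X /Y (mul_bin_left (u.+1 + u.+1) u).
  congr (_ * _)%N; lia.
have YX : (Y <= X)%N by nia.
have F : X = (u.+2 * (X - Y))%N by nia.
by rewrite {1}F mulKn // natrB.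
Qed.

Lemma qs_G n : qschroeder n = G n 0.
Proof.
apply/polyP => j; rewrite coefG /qschroeder coef_sum big_mkord.
case: (leqP j n) => H.
  rewrite (eq_bigr (fun k : 'I_n.+1 => ('C(n + k, n - k) * catalan k)%:R * (k == (n - j)%N :> nat)%:R)); last first.
    move=> k _; rewrite coefZ coefXn; congr (_ * _%:R); have := ltn_ord k; lia.
  rewrite (@sum_delta _ n.+1 (n - j)%N (fun k => ('C(n + k, n - k) * catalan k)%:R)); last lia.
  rewrite /c ifT; last lia.
  rewrite /Nf natrM cat_W; congr (_%:R * Wz _ _); try lia.
  congr binomial; lia.
rewrite /c ifF; last lia.
apply: big1 => k _; rewrite coefZ coefXn (_ : (j == (n - k)%N) = false) ?mulr0 //.
have := ltn_ord k; lia.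
Qed.

Theorem corollary4p10 : q_log_convex qschroeder.
Proof.
move=> n n1 i; case: n n1 => [|m] // _.
rewrite /= !qs_G -!AG; exact: A_lc.
Qed.
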